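(* Let $q$ be a prime power with $q\not\equiv -1\pmod 3$, let $G=\mathrm{SU}_3(q)$, and let $\mathcal{C}$ be the $G$-conjugacy class $C_3^{(0,0)}$. Then $K_{\mathcal{C}}$ is irreducible.
   Context: $\mathrm{SU}_3(q)$ is the group of determinant-one matrices $M\in\mathrm{GL}_3(q^2)$ with $M^*JM=J$, where $J$ has ones on the anti-diagonal and zeros elsewhere and $M^*$ is the transpose of $M$ with every entry raised to the $q$-th power. $C_3^{(0,0)}$ is the $\mathrm{SU}_3(q)$-conjugacy class of $\begin{pmatrix}1&1&\alpha\\0&1&-1\\0&0&1\end{pmatrix}$ where $\alpha\in\mathbb{F}_{q^2}^\times$ satisfies $\alpha+\alpha^q+1=0$. For a finite group $G$ and a subset $\mathcal{C}\subseteq G\setminus\{1\}$ closed under conjugation, the Killing form is $K_{\mathcal{C}}(a,b)=|C_G(ab)\cap\mathcal{C}|$ on the basis $\mathcal{C}$; it is irreducible if the graph with vertex set $\mathcal{C}$, in which distinct $a,b$ are adjacent iff $C_G(ab)\cap\mathcal{C}\neq\emptyset$, is connected. *)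

(* Defs.v *)
From mathcomp Require Import all_boot all_order all_algebra all_field.
Set Implicit Arguments. Unset Strict Implicit. Unset Printing Implicit Defensive.
Import GRing.Theory.
Local Open Scope ring_scope.

Definition prime_power (q : nat) : Prop :=
  exists p k : nat, [/\ prime p, (0 < k)%N & q = (p ^ k)%N].

Section SU3.
Variable F : finFieldType.

Definition Jmx : 'M[F]_3 := \matrix_(i < 3, j < 3) (if (i + j == 2)%N then 1 else 0).

Definition hstar (q : nat) (M : 'M[F]_3) : 'M[F]_3 := map_mx (fun x => x ^+ q) M^T.

(* SU_3(q) inside GL_3(F), F = F_{q^2} *)
Definition SU3 (q : nat) : {set 'M[F]_3} :=
  [set M : 'M[F]_3 | (hstar q M *m Jmx *m M == Jmx) && (\det M == 1)].

Definition u3 (a : F) : 'M[F]_3 :=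
  \matrix_(i < 3, j < 3)
    match nat_of_ord i, nat_of_ord j with
    | 0, 0 => 1 | 0, 1 => 1 | 0, 2 => a
    | 1, 1 => 1 | 1, 2 => -1
    | 2, 2 => 1
    | _, _ => 0
    end.

Definition mx_class (G : {set 'M[F]_3}) (x : 'M[F]_3) : {set 'M[F]_3} :=
  [set invmx g *m x *m g | g in G].

Definition cent_meets (G C : {set 'M[F]_3}) (y : 'M[F]_3) : bool :=
  [exists c, [&& c \in G, c \in C & c *m y == y *m c]].

Definition killing_adj (G C : {set 'M[F]_3}) : rel 'M[F]_3 :=
  fun a b => [&& a \in C, b \in C, a != b & cent_meets G C (a *m b)].

(* K_C irreducible: the graph on vertex set C is connected *)
Definition killing_irreducible (G C : {set 'M[F]_3}) : Prop :=
  forall a b, a \in C -> b \in C -> connect (killing_adj G C) a b.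

End SU3.

(* Main.v *)
Require Import Defs.
From mathcomp Require Import all_boot all_order all_algebra all_field.
From mathcomp Require Import ring zify.
Set Implicit Arguments. Unset Strict Implicit. Unset Printing Implicit Defensive.
Import GRing.Theory.
Local Open Scope ring_scope.


Section M3sec.
Variable F : finFieldType.

Definition o0 : 'I_3 := @Ordinal 3 0 isT.
Definition o1 : 'I_3 := @Ordinal 3 1 isT.
Definition o2 : 'I_3 := @Ordinal 3 2 isT.

Definition M3 (a b c d e f g h i : F) : 'M[F]_3 :=
  \matrix_(r < 3, s < 3)
    match nat_of_ord r, nat_of_ord s with
    | 0, 0 => a | 0, 1 => b | 0, _ => c
    | 1, 0 => d | 1, 1 => e | 1, _ => f
    | _, 0 => g | _, 1 => h | _, _ => i
    end.

Lemma M3E (A : 'M[F]_3) :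
  A = M3 (A o0 o0) (A o0 o1) (A o0 o2) (A o1 o0) (A o1 o1) (A o1 o2)
         (A o2 o0) (A o2 o1) (A o2 o2).
Proof.
apply/matrixP => -[[|[|[|r]]] Hr] [[|[|[|s]]] Hs]; rewrite !mxE //=;
  by congr (A _ _); apply/val_inj.
Qed.

Lemma M3_eq a b c d e f g h i a' b' c' d' e' f' g' h' i' :
  a = a' -> b = b' -> c = c' -> d = d' -> e = e' -> f = f' -> g = g' -> h = h' -> i = i' ->
  M3 a b c d e f g h i = M3 a' b' c' d' e' f' g' h' i'.
Proof. by move=> -> -> -> -> -> -> -> -> ->. Qed.

Lemma M3_00 a b c d e f g h i : M3 a b c d e f g h i o0 o0 = a. Proof. by rewrite mxE. Qed.
Lemma M3_01 a b c d e f g h i : M3 a b c d e f g h i o0 o1 = b. Proof. by rewrite mxE. Qed.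
Lemma M3_02 a b c d e f g h i : M3 a b c d e f g h i o0 o2 = c. Proof. by rewrite mxE. Qed.
Lemma M3_10 a b c d e f g h i : M3 a b c d e f g h i o1 o0 = d. Proof. by rewrite mxE. Qed.
Lemma M3_11 a b c d e f g h i : M3 a b c d e f g h i o1 o1 = e. Proof. by rewrite mxE. Qed.
Lemma M3_12 a b c d e f g h i : M3 a b c d e f g h i o1 o2 = f. Proof. by rewrite mxE. Qed.
Lemma M3_20 a b c d e f g h i : M3 a b c d e f g h i o2 o0 = g. Proof. by rewrite mxE. Qed.
Lemma M3_21 a b c d e f g h i : M3 a b c d e f g h i o2 o1 = h. Proof. by rewrite mxE. Qed.
Lemma M3_22 a b c d e f g h i : M3 a b c d e f g h i o2 o2 = i. Proof. by rewrite mxE. Qed.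

Lemma M3_inj a b c d e f g h i a' b' c' d' e' f' g' h' i' :
  M3 a b c d e f g h i = M3 a' b' c' d' e' f' g' h' i' ->
  (a = a' /\ b = b' /\ c = c') /\ (d = d' /\ e = e' /\ f = f') /\ (g = g' /\ h = h' /\ i = i').
Proof.
move=> E.
have X := fun r s => congr1 (fun M : 'M[F]_3 => M r s) E.
move: (X o0 o0) (X o0 o1) (X o0 o2) (X o1 o0) (X o1 o1) (X o1 o2)
      (X o2 o0) (X o2 o1) (X o2 o2); rewrite !mxE /=.
by do 9 move=> ->.
Qed.

Lemma mulM3 a b c d e f g h i a' b' c' d' e' f' g' h' i' :
  M3 a b c d e f g h i *m M3 a' b' c' d' e' f' g' h' i' =
  M3 (a*a' + b*d' + c*g') (a*b' + b*e' + c*h') (a*c' + b*f' + c*i')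
     (d*a' + e*d' + f*g') (d*b' + e*e' + f*h') (d*c' + e*f' + f*i')
     (g*a' + h*d' + i*g') (g*b' + h*e' + i*h') (g*c' + h*f' + i*i').
Proof.
apply/matrixP => -[[|[|[|r]]] Hr] [[|[|[|s]]] Hs]; rewrite !mxE //=;
  rewrite !big_ord_recr big_ord0 /= !mxE /= add0r //.
Qed.

Lemma detM3 a b c d e f g h i :
  \det (M3 a b c d e f g h i) =
  a*(e*i - f*h) - b*(d*i - f*g) + c*(d*h - e*g).
Proof.
rewrite (expand_det_row _ o0) !big_ord_recr big_ord0 /= add0r.
rewrite /cofactor !(expand_det_row _ ord0) !big_ord_recr big_ord0 /= !add0r.
rewrite /cofactor !det_mx11 !mxE /= !big_ord0 !add0r.
rewrite !add0n !expr0 !expr1 !mul1r !mulN1r /=.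
ring.
Qed.

Lemma oneM3 : (1%:M : 'M[F]_3) = M3 1 0 0 0 1 0 0 0 1.
Proof.
by apply/matrixP => -[[|[|[|r]]] Hr] [[|[|[|s]]] Hs]; rewrite !mxE.
Qed.

Lemma JM3 : Jmx F = M3 0 0 1 0 1 0 1 0 0.
Proof.
by apply/matrixP => -[[|[|[|r]]] Hr] [[|[|[|s]]] Hs]; rewrite !mxE.
Qed.

Lemma u3M3 (a : F) : u3 a = M3 1 1 a 0 1 (-1) 0 0 1.
Proof.
by apply/matrixP => -[[|[|[|r]]] Hr] [[|[|[|s]]] Hs]; rewrite !mxE.
Qed.

Lemma hstarM3 q a b c d e f g h i :
  hstar q (M3 a b c d e f g h i) =
  M3 (a^+q) (d^+q) (g^+q) (b^+q) (e^+q) (h^+q) (c^+q) (f^+q) (i^+q).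
Proof.
by apply/matrixP => -[[|[|[|r]]] Hr] [[|[|[|s]]] Hs]; rewrite !mxE.
Qed.

End M3sec.


Section Main.
Variable q : nat.
Variable F : finFieldType.
Hypothesis HqD : forall x y : F, (x + y) ^+ q = x ^+ q + y ^+ q.
Hypothesis Hq2 : (2 < q)%N.
Hypothesis Hcard : #|F| = (q ^ 2)%N.
Hypothesis Hsurj : forall b : F, b != 0 -> exists2 a : F, a != 0 & a ^+ q / a ^+ 2 = b.
Variable alpha : F.
Hypothesis Ha0 : alpha != 0.
Hypothesis Hal : alpha + alpha ^+ q + 1 = 0.

Local Notation G := (SU3 F q).
Local Notation x := (u3 alpha).
Local Notation C := (mx_class G x).
Local Notation adj := (killing_adj G C).

Definition cj (x : F) := x ^+ q.

Lemma cjD x y : cj (x + y) = cj x + cj y. Proof. exact: HqD. Qed.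
Lemma cjM x y : cj (x * y) = cj x * cj y. Proof. exact: exprMn. Qed.
Lemma cj0 : cj 0 = 0. Proof. by rewrite /cj expr0n; case: q Hq2. Qed.
Lemma cj1 : cj 1 = 1. Proof. by rewrite /cj expr1n. Qed.
Lemma cjN x : cj (- x) = - cj x.
Proof. by apply/eqP; rewrite -subr_eq0 opprK -cjD addNr cj0. Qed.
Lemma cjB x y : cj (x - y) = cj x - cj y. Proof. by rewrite cjD cjN. Qed.
Lemma cjK x : cj (cj x) = x.
Proof. by rewrite /cj -exprM mulnn -Hcard expf_card. Qed.
Lemma cjV x : cj (x^-1) = (cj x)^-1. Proof. exact: exprVn. Qed.
Lemma cj_eq0 x : (cj x == 0) = (x == 0).
Proof. by rewrite /cj expf_eq0; case: q Hq2. Qed.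
Lemma cjnat n : cj n%:R = n%:R.
Proof. by elim: n => [|n IH]; rewrite ?cj0 // -addn1 natrD cjD IH cj1. Qed.
Lemma hstar_mul (A B : 'M[F]_3) : hstar q (A *m B) = hstar q B *m hstar q A.
Proof.
apply/matrixP => i j; rewrite !mxE.
rewrite (big_morph (fun s : F => s ^+ q) HqD cj0).
apply: eq_bigr => k _; rewrite !mxE exprMn mulrC //.
Qed.

Lemma hstar1 : hstar q (1%:M : 'M[F]_3) = 1%:M.
Proof. by rewrite oneM3 hstarM3 expr1n expr0n; case: q Hq2. Qed.

Lemma inG (M : 'M[F]_3) : (M \in G) = (hstar q M *m Jmx F *m M == Jmx F) && (\det M == 1).
Proof. by rewrite inE. Qed.

Lemma inGP (M : 'M[F]_3) : M \in G -> hstar q M *m Jmx F *m M = Jmx F /\ \det M = 1.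
Proof. by rewrite inG => /andP[/eqP -> /eqP ->]. Qed.

Lemma G_unit (M : 'M[F]_3) : M \in G -> M \in unitmx.
Proof. by move/inGP=> [_ D]; rewrite unitmxE D unitr1. Qed.

Lemma G1 : 1%:M \in G.
Proof. by rewrite inG hstar1 mul1mx mulmx1 det1 !eqxx. Qed.

Lemma GM (A B : 'M[F]_3) : A \in G -> B \in G -> A *m B \in G.
Proof.
move=> /inGP[HA DA] /inGP[HB DB]; rewrite inG hstar_mul det_mulmx DA DB mulr1 eqxx andbT.
have -> : hstar q B *m hstar q A *m Jmx F *m (A *m B) =
  hstar q B *m (hstar q A *m Jmx F *m A) *m B by rewrite !mulmxA.
by rewrite HA HB eqxx.
Qed.

Lemma GV (A : 'M[F]_3) : A \in G -> invmx A \in G.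
Proof.
move=> AG; have U := G_unit AG; move/inGP: AG => [HA DA].
rewrite inG det_inv DA invr1 eqxx andbT.
have E : hstar q (invmx A) *m hstar q A = 1%:M by rewrite -hstar_mul mulmxV // hstar1.
have -> : hstar q (invmx A) *m Jmx F *m invmx A =
  hstar q (invmx A) *m hstar q A *m Jmx F *m (A *m invmx A).
  by rewrite -{1}HA !mulmxA.
by rewrite E mul1mx mulmxV // mulmx1.
Qed.

Lemma invmxM (A B : 'M[F]_3) : A \in unitmx -> B \in unitmx ->
  invmx (A *m B) = invmx B *m invmx A.
Proof.
move=> UA UB.
have UAB : A *m B \in unitmx by rewrite unitmx_mul UA UB.
have H1 : A *m B *m (invmx B *m invmx A) = 1%:M.
  by rewrite mulmxA -(mulmxA A) mulmxV // mulmx1 mulmxV.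
by rewrite -[LHS]mulmx1 -H1 mulmxA mulVmx // mul1mx.
Qed.


Lemma hstarC a b c d e f g h i :
  hstar q (M3 a b c d e f g h i) =
  M3 (cj a) (cj d) (cj g) (cj b) (cj e) (cj h) (cj c) (cj f) (cj i).
Proof. exact: hstarM3. Qed.

Lemma cja : cj alpha = - 1 - alpha.
Proof.
have H : alpha + cj alpha + 1 = 0 := Hal.
by rewrite -[cj alpha]subr0 -H; ring.
Qed.

Ltac cjs := rewrite ?(cjD, cjB, cjM, cjN, cjV, cjK, cj1, cj0, cjnat); rewrite ?cja.

Lemma xG : x \in G.
Proof.
rewrite inG u3M3 hstarC JM3 !mulM3 detM3; apply/andP; split; apply/eqP.
  apply: M3_eq; cjs; ring.
ring.
Qed.

Lemma memC g : g \in G -> invmx g *m x *m g \in C.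
Proof. by move=> gG; apply/imsetP; exists g. Qed.

Lemma CP a : a \in C -> exists2 g, g \in G & a = invmx g *m x *m g.
Proof. by case/imsetP=> g gG ->; exists g. Qed.

Lemma CG a : a \in C -> a \in G.
Proof. by case/CP=> g gG ->; apply: GM => //; apply: GM => //; [exact: GV | exact: xG]. Qed.

Lemma conjM (g h a : 'M[F]_3) : g \in G -> h \in G ->
  invmx h *m (invmx g *m a *m g) *m h = invmx (g *m h) *m a *m (g *m h).
Proof.
move=> gG hG; by rewrite invmxM ?(G_unit gG) ?(G_unit hG) // !mulmxA.
Qed.

Lemma Cconj a h : a \in C -> h \in G -> invmx h *m a *m h \in C.
Proof. by case/CP=> g gG -> hG; rewrite conjM // memC // GM. Qed.

Lemma conj_mul (h a b : 'M[F]_3) : h \in G ->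
  (invmx h *m a *m h) *m (invmx h *m b *m h) = invmx h *m (a *m b) *m h.
Proof.
move=> hG; have U := G_unit hG.
by rewrite !mulmxA -(mulmxA _ h) mulmxV // mulmx1.
Qed.

Lemma cent_conj y h : cent_meets G C y -> h \in G -> cent_meets G C (invmx h *m y *m h).
Proof.
move=> /existsP[c /and3P[cG cC /eqP E]] hG; apply/existsP; exists (invmx h *m c *m h).
apply/and3P; split; first by apply: GM => //; apply: GM => //; exact: GV.
  exact: Cconj.
by rewrite !conj_mul // E.
Qed.

Lemma conj_inj h a b : h \in G -> invmx h *m a *m h = invmx h *m b *m h -> a = b.
Proof.
move=> hG E; have U := G_unit hG.
have := congr1 (fun M => h *m M *m invmx h) E.
by rewrite !mulmxA !mulmxV // !mul1mx -!mulmxA !mulmxV // !mulmx1.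
Qed.

Lemma adj_conj h a b : h \in G -> adj a b -> adj (invmx h *m a *m h) (invmx h *m b *m h).
Proof.
move=> hG /and4P[aC bC ab cm]; apply/and4P; split; rewrite ?Cconj //.
  by apply: contra ab => /eqP /conj_inj -> //.
by rewrite conj_mul // cent_conj.
Qed.

Lemma connect_conj h a b : h \in G -> connect adj a b ->
  connect adj (invmx h *m a *m h) (invmx h *m b *m h).
Proof.
move=> hG /connectP[p pth ->]; elim: p a pth => [|c p IH] a /=; first by rewrite connect0.
case/andP=> ac pc; apply: connect_trans (IH _ pc).
by apply: connect1; apply: adj_conj.
Qed.

Lemma adj_sym : symmetric adj.
Proof.
suff H : forall a b, adj a b -> adj b a.
  by move=> a b; apply/idP/idP; apply: H.
move=> a b /and4P[aC bC ab cm]; apply/and4P; split; rewrite // 1?eq_sym //.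
have aG := CG aC; have U := G_unit aG.
have -> : b *m a = invmx a *m (a *m b) *m a by rewrite !mulmxA mulVmx // mul1mx.
exact: cent_conj.
Qed.

Definition PP g := connect adj x (invmx g *m x *m g).

Lemma PP_mul g h : g \in G -> h \in G -> PP g -> PP h -> PP (g *m h).
Proof.
move=> gG hG Pg Ph; rewrite /PP -conjM //.
apply: connect_trans Ph _; exact: connect_conj.
Qed.

Lemma PP_all : (forall g, g \in G -> PP g) -> killing_irreducible G C.
Proof.
move=> H a b aC bC.
have sym := sym_connect_sym adj_sym.
case/CP: aC => g gG ->; case/CP: bC => h hG ->.
apply: connect_trans (H h hG); rewrite sym; exact: H.
Qed.


Definition uu b d := M3 1 b d 0 1 (- cj b) 0 0 1.
Definition tt a := M3 a 0 0 0 (cj a / a) 0 0 0 (cj a)^-1.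
Definition Wm := @M3 F 0 0 1 0 (-1) 0 1 0 0.

Lemma cj_neq0 a : a != 0 -> cj a != 0.
Proof. by rewrite cj_eq0. Qed.

Lemma uuG b d : d + cj d + b * cj b = 0 -> uu b d \in G.
Proof.
move=> H; have Hd : cj d = - d - b * cj b by rewrite -[cj d]subr0 -H; ring.
rewrite inG /uu hstarC JM3 !mulM3 detM3; apply/andP; split; apply/eqP.
  apply: M3_eq; cjs; rewrite ?Hd; ring.
ring.
Qed.

Lemma ttG a : a != 0 -> tt a \in G.
Proof.
move=> a0; have ca0 := cj_neq0 a0.
rewrite inG /tt hstarC JM3 !mulM3 detM3; apply/andP; split; apply/eqP.
  apply: M3_eq; cjs; field; rewrite ?a0 ?ca0 //.
field; rewrite ?a0 ?ca0 //.
Qed.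

Lemma WG : Wm \in G.
Proof.
rewrite inG /Wm hstarC JM3 !mulM3 detM3; apply/andP; split; apply/eqP.
  apply: M3_eq; cjs; ring.
ring.
Qed.

Lemma xuu : x = uu 1 alpha.
Proof. by rewrite u3M3 /uu cj1. Qed.

Lemma uu_mul b d c e : uu b d *m uu c e = uu (b + c) (d + e - b * cj c).
Proof. rewrite /uu mulM3; apply: M3_eq; cjs; ring. Qed.

Lemma x_tt a : a != 0 -> x *m tt a = tt a *m uu (cj a / a ^+ 2) (alpha / (a * cj a)).
Proof.
move=> a0; have ca0 := cj_neq0 a0.
rewrite u3M3 /tt /uu !mulM3; apply: M3_eq; cjs; field; rewrite ?a0 ?ca0 //.
Qed.

Lemma uu_o10 b d : uu b d o1 o0 = 0. Proof. by rewrite /uu mxE. Qed.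
Lemma uu_o20 b d : uu b d o2 o0 = 0. Proof. by rewrite /uu mxE. Qed.

Lemma uuaG c : uu c (alpha * (c * cj c)) \in G.
Proof. by apply: uuG; cjs; ring. Qed.

Lemma ClaimA b d : b != 0 -> d + cj d + b * cj b = 0 ->
  exists k, [/\ k \in G, k o1 o0 = 0, k o2 o0 = 0 & x *m k = k *m uu b d].
Proof.
move=> b0 H; have Hd : cj d = - d - b * cj b by rewrite -[cj d]subr0 -H; ring.
have [a a0 hab] := Hsurj b0; have ca0 := cj_neq0 a0.
have {}hab : cj a / a ^+ 2 = b := hab.
pose w := d - alpha / (a * cj a).
pose c := - alpha * w / cj b.
pose e := alpha * (c * cj c).
have uG : uu c e \in G := uuaG c.
exists (tt a *m uu c e); split.
- by apply: GM => //; apply: ttG.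
- by rewrite /tt /uu mulM3 mxE /=; ring.
- by rewrite /tt /uu mulM3 mxE /=; ring.
rewrite mulmxA x_tt // -!mulmxA !uu_mul; congr (_ *m _).
rewrite /uu; apply: M3_eq => //; rewrite /e /c /w; cjs; rewrite ?Hd; cjs;
  rewrite -?hab; cjs; field; rewrite ?a0 ?ca0 //.
Qed.

Lemma stabM3 a b c d e f g h i : M3 a b c d e f g h i \in G -> a = 1 -> d = 0 -> g = 0 ->
  M3 a b c d e f g h i = uu b c /\ c + cj c + b * cj b = 0.
Proof.
move=> yG a1 d0 g0; subst a d g; move/inGP: yG => [].
rewrite hstarC JM3 !mulM3 detM3 => E D.
have [[E00 [E01 E02]] [[E10 [E11 E12]] [E20 [E21 E22]]]] := M3_inj E.
have h0 : h = 0.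
  by apply/eqP; rewrite -cj_eq0; apply/eqP; rewrite -E10; ring.
subst h.
have i1 : i = 1.
  have ci : cj i = 1 by rewrite -E20; ring.
  by rewrite -[i]cjK ci cj1.
subst i.
have e1 : e = 1 by rewrite -D; ring.
subst e.
have f1 : f = - cj b by rewrite -[f]subr0 -E12; cjs; ring.
subst f.
split; first by rewrite /uu.
by rewrite -E22; cjs; ring.
Qed.


Lemma xC : x \in C.
Proof. by have := memC G1; rewrite invmx1 mul1mx mulmx1. Qed.

Lemma uuC b d : b != 0 -> d + cj d + b * cj b = 0 -> uu b d \in C.
Proof.
move=> b0 H; have [k [kG _ _ E]] := ClaimA b0 H.
have -> : uu b d = invmx k *m x *m k.
  by rewrite -mulmxA E mulKmx // G_unit.
exact: memC.
Qed.

Lemma KL y : y \in G -> y o0 o0 = 1 -> y o1 o0 = 0 -> y o2 o0 = 0 -> cent_meets G C y.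
Proof.
move=> yG h00 h10 h20; rewrite (M3E y) in yG *.
have [-> V] := stabM3 yG h00 h10 h20.
apply/existsP; have [b0|bn0] := eqVneq (y o0 o1) 0.
  exists x; rewrite xG xC /= xuu !uu_mul b0; cjs; apply/eqP; congr uu; ring.
exists (uu (y o0 o1) (y o0 o2)); rewrite uuC // eqxx andbT.
by rewrite andbT; apply: uuG.
Qed.

Definition Em := @M3 F 1 0 0 0 0 0 0 0 0.

Lemma fixE (y : 'M[F]_3) : y *m Em = Em -> [/\ y o0 o0 = 1, y o1 o0 = 0 & y o2 o0 = 0].
Proof.
rewrite {1}(M3E y) /Em mulM3 => /M3_inj [[E0 _] [[E1 _] [E2 _]]].
by split; [rewrite -E0 | rewrite -E1 | rewrite -E2]; ring.
Qed.

Lemma colE (y : 'M[F]_3) c : y *m Em = c *: Em -> y o1 o0 = 0 /\ y o2 o0 = 0.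
Proof.
rewrite {1}(M3E y) /Em mulM3 => /matrixP E.
move: (E o1 o0) (E o2 o0); rewrite !mxE /= => e1 e2.
by split; [rewrite -[RHS](mulr0 c) -e1 | rewrite -[RHS](mulr0 c) -e2]; ring.
Qed.

Lemma KLE y : y \in G -> y *m Em = Em -> cent_meets G C y.
Proof. by move=> yG /fixE[]; apply: KL. Qed.

Lemma KL' y g : y \in G -> g \in G -> y *m (g *m Em) = g *m Em -> cent_meets G C y.
Proof.
move=> yG gG E; have U := G_unit gG.
have H : cent_meets G C (invmx g *m y *m g).
  apply: KLE; first by apply: GM => //; apply: GM => //; apply: GV.
  by rewrite -!mulmxA E mulKmx.
have := cent_conj H (GV gG); rewrite invmxK.
by rewrite !mulmxA mulmxV // mul1mx -mulmxA mulmxV // mulmx1.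
Qed.

Lemma gEm (g : 'M[F]_3) : g o1 o0 = 0 -> g o2 o0 = 0 -> g *m Em = g o0 o0 *: Em.
Proof.
move=> h1 h2; rewrite {1}(M3E g) /Em mulM3 h1 h2.
apply/matrixP => -[[|[|[|r]]] Hr] [[|[|[|s]]] Hs]; rewrite !mxE /=; ring.
Qed.

Lemma xEm : x *m Em = Em.
Proof. rewrite u3M3 /Em mulM3; apply: M3_eq; ring. Qed.

Lemma PP2 g : g \in G -> g o1 o0 = 0 -> g o2 o0 = 0 -> PP g.
Proof.
move=> gG h1 h2; have U := G_unit gG.
have aC := memC gG; have aG := CG aC.
have aE : invmx g *m x *m g *m Em = Em.
  have E1 : invmx g *m (g *m Em) = Em by rewrite mulKmx.
  rewrite gEm // -scalemxAr in E1.
  by rewrite -!mulmxA gEm // -!scalemxAr xEm.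
rewrite /PP; have [<-|ne] := eqVneq x (invmx g *m x *m g); first exact: connect0.
apply: connect1; apply/and4P; split => //; first exact: xC.
by apply: KLE; [apply: GM => //; apply: xG | rewrite -(mulmxA x) aE xEm].
Qed.

Lemma invE (g : 'M[F]_3) : g \in G -> g o1 o0 = 0 -> g o2 o0 = 0 ->
  (invmx g) o1 o0 = 0 /\ (invmx g) o2 o0 = 0.
Proof.
move=> gG h1 h2; have U := G_unit gG.
have E1 : invmx g *m (g *m Em) = Em by rewrite mulKmx.
move: E1; rewrite gEm // -scalemxAr {1}(M3E (invmx g)) /Em mulM3 => /matrixP E.
move: (E o0 o0) (E o1 o0) (E o2 o0); rewrite !mxE /= => e0 e1 e2.
have g0 : g o0 o0 != 0.
  by apply/eqP => g0; move: e0; rewrite g0 mul0r => /eqP; rewrite eq_sym oner_eq0.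
split.
  by apply/eqP; move: (mulf_eq0 (g o0 o0) (invmx g o1 o0)); rewrite (negbTE g0) /= => <-; apply/eqP; rewrite -e1; ring.
by apply/eqP; move: (mulf_eq0 (g o0 o0) (invmx g o2 o0)); rewrite (negbTE g0) /= => <-; apply/eqP; rewrite -e2; ring.
Qed.

Lemma WW : Wm *m Wm = 1%:M.
Proof. by rewrite /Wm mulM3 oneM3; apply: M3_eq; ring. Qed.

Lemma invW : invmx Wm = Wm.
Proof.
have U := G_unit WG.
by rewrite -[invmx Wm]mulmx1 -WW mulmxA mulVmx // mul1mx.
Qed.

Lemma ca0 : cj alpha != 0.
Proof. exact: cj_neq0. Qed.

Lemma cna : -1 - alpha != 0.
Proof. by rewrite -cja ca0. Qed.

Lemma PPW : PP Wm.
Proof.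
pose n := alpha * cj alpha.
pose be := (n * alpha)^-1.
pose D := be * cj be * cj alpha.
have n0 : n != 0 by rewrite mulf_neq0 // ca0.
have be0 : be != 0 by rewrite invr_eq0 mulf_neq0.
have V : D + cj D + be * cj be = 0.
  rewrite /D /be /n; cjs; field; rewrite ?Ha0 ?cna //.
have [k [kG k1 k2 Ek]] := ClaimA be0 V.
have Uk := G_unit kG.
have hG : k *m Wm \in G by apply: GM => //; apply: WG.
have Eb : invmx (k *m Wm) *m x *m (k *m Wm) = Wm *m uu be D *m Wm.
  rewrite invmxM // ?(G_unit WG) // invW.
  by rewrite !mulmxA -(mulmxA _ x) Ek !mulmxA -(mulmxA Wm (invmx k) k) mulVmx // mulmx1.
have Ph : PP (k *m Wm).
  rewrite /PP Eb; apply: connect1; apply/and4P; split.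
  - exact: xC.
  - by rewrite -Eb; apply: memC.
  - apply/eqP => /(congr1 (fun M : 'M[F]_3 => M o2 o0)).
    rewrite u3M3 /Wm /uu !mulM3 !mxE /= => /eqP.
    have HD : D != 0 by rewrite /D !mulf_neq0 // ?ca0 // cj_neq0.
    move=> H; apply/(negP HD)/eqP; rewrite (eqP H) /D; ring.
  - have bG : Wm *m uu be D *m Wm \in G by rewrite -Eb; apply: CG; apply: memC.
    have gG : uu (- alpha) (n * cj alpha) *m Wm \in G.
      apply: GM; last exact: WG.
      by apply: uuG; rewrite /n; cjs; ring.
    apply: (KL' _ gG); first by apply: GM => //; apply: xG.
    rewrite u3M3 /Wm /uu /Em !mulM3; apply: M3_eq; rewrite /D /be /n; cjs;
      field; rewrite ?Ha0 ?cna //.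
have [ik1 ik2] := invE kG k1 k2.
have := PP_mul (GV kG) hG (PP2 (GV kG) ik1 ik2) Ph.
by rewrite mulmxA mulVmx // mul1mx.
Qed.

Lemma isoM3 a b c d e f g h i : M3 a b c d e f g h i \in G ->
  cj a * g + cj d * d + cj g * a = 0.
Proof.
move=> /inGP[]; rewrite hstarC JM3 !mulM3 => /M3_inj[[E _] _] _.
by rewrite -E; ring.
Qed.

Lemma isoG (g : 'M[F]_3) : g \in G ->
  cj (g o0 o0) * g o2 o0 + cj (g o1 o0) * g o1 o0 + cj (g o2 o0) * g o0 o0 = 0.
Proof. by move=> gG; move: gG; rewrite {1}(M3E g) => /isoM3. Qed.

Lemma PPuu b d : d + cj d + b * cj b = 0 -> PP (uu b d).
Proof. by move=> V; apply: PP2; rewrite ?uu_o10 ?uu_o20 //; apply: uuG. Qed.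

Lemma PPall g : g \in G -> PP g.
Proof.
move=> gG; have iso := isoG gG.
have [g2|g2] := eqVneq (g o2 o0) 0.
  apply: PP2 => //; move: iso; rewrite g2 cj0 !(mulr0, mul0r, add0r, addr0) => /eqP.
  by rewrite mulf_eq0 cj_eq0 orbb => /eqP.
have cg2 : cj (g o2 o0) != 0 by rewrite cj_eq0.
pose b := - cj (g o1 o0 / g o2 o0).
pose d := g o0 o0 / g o2 o0.
have V : d + cj d + b * cj b = 0.
  rewrite /b /d; cjs.
  transitivity ((cj (g o0 o0) * g o2 o0 + cj (g o1 o0) * g o1 o0 + cj (g o2 o0) * g o0 o0)
     / (g o2 o0 * cj (g o2 o0))); first by field; rewrite ?g2 ?cg2.
  by rewrite iso mul0r.
pose k := uu b d *m Wm.
have kG : k \in G by apply: GM; [apply: uuG | apply: WG].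
have Uk := G_unit kG.
have E1 : g *m Em = g o2 o0 *: (k *m Em).
  rewrite {1}(M3E g) /k /uu /Wm /Em !mulM3 /b /d; cjs.
  apply/matrixP => -[[|[|[|r]]] Hr] [[|[|[|s]]] Hs]; rewrite !mxE /=;
    field; rewrite ?g2 //.
have E2 : (invmx k *m g) *m Em = g o2 o0 *: Em.
  by rewrite -mulmxA E1 -scalemxAr mulKmx.
have hG : invmx k *m g \in G by apply: GM => //; apply: GV.
have [e1 e2] := colE E2.
have P2 : PP (invmx k *m g) by apply: PP2.
have Pk : PP k.
  apply: PP_mul; [apply: uuG | apply: WG | apply: PPuu | apply: PPW] => //.
have := PP_mul kG hG Pk P2.
by rewrite mulmxA mulmxV // mul1mx.
Qed.


Lemma main_sec : killing_irreducible G C.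
Proof. exact: PP_all PPall. Qed.

End Main.



Lemma cop3 (q : nat) : (2 < q)%N -> (q %% 3 != 2)%N -> coprime (q - 2) (q ^ 2 - 1).
Proof.
move=> q2 q3.
have -> : (q ^ 2 - 1 = (q + 2) * (q - 2) + 3)%N by rewrite expnS expn1; nia.
rewrite /coprime gcdnMDl -/(coprime _ _) coprime_sym prime_coprime //.
apply/negP => /dvdnP[k hk]; move/eqP: q3; apply; lia.
Qed.

Lemma surj (q : nat) (F : finFieldType) : (2 < q)%N -> (q %% 3 != 2)%N -> #|F| = (q ^ 2)%N ->
  forall b : F, b != 0 -> exists2 a : F, a != 0 & a ^+ q / a ^+ 2 = b.
Proof.
move=> q2 q3 Hc b b0.
have q20 : (0 < q - 2)%N by lia.
have [km kn E _] := egcdnP (q ^ 2 - 1) q20.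
have g1 : gcdn (q - 2) (q ^ 2 - 1) = 1%N by apply/eqP; apply: cop3.
rewrite g1 in E.
exists (b ^+ km); first by rewrite expf_neq0.
have b1 : b ^+ (q ^ 2 - 1) = 1.
  have hs : (q ^ 2 = (q ^ 2 - 1).+1)%N by rewrite expnS expn1; nia.
  apply: (mulfI b0); rewrite mulr1 -exprS -hs -Hc expf_card //.
rewrite -expfB // -exprM E exprD exprM.
by rewrite -exprM mulnC exprM b1 expr1n mul1r expr1.
Qed.

Theorem corollary4p11 (q : nat) (F : finFieldType) (alpha : F) :
  prime_power q ->
  (q %% 3 != 2)%N ->
  #|F| = (q ^ 2)%N ->
  alpha != 0 ->
  alpha + alpha ^+ q + 1 = 0 ->
  killing_irreducible (SU3 F q) (mx_class (SU3 F q) (u3 alpha)).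
Proof.
move=> [p [k [pp k0 qE]]] q3 Hc a0 Hal.
have Hp : p \in [pchar F].
  by apply: (@card_finPcharP _ p (k * 2)) => //; rewrite Hc qE expnM.
have HqD : forall x y : F, (x + y) ^+ q = x ^+ q + y ^+ q.
  move=> x y; apply: exprDn_pchar.
  by rewrite (eq_pnat _ (pcharf_eq Hp)) qE pnatX pnat_id.
have q1 : (1 < q)%N.
  have := finNzRing_gt1 F; rewrite Hc; case: (q) => [|[|n]] //.
have q2 : (2 < q)%N by move: q3; lia.
exact: (main_sec HqD q2 Hc (surj q2 q3 Hc) a0 Hal).
Qed.
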